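(* Let $N\ge2$, $\mathcal{D}=\{d_1,\dots,d_N\}\subset\mathbb{Z}$ with $\#\mathcal{D}=N$, and $\tau_{d_i}(x)=\frac1N(x+d_i)$ on $\mathbb{R}$. If the attractor $X$ of $\{\tau_{d_i}\}$ is a self-similar tile (equivalently, has positive Lebesgue measure), then there exists $\mathcal{E}\subset\mathbb{Z}$ such that $\mathcal{D}\oplus\mathcal{E}=\mathbb{Z}$.
   Context: The attractor $X$ is the unique nonempty compact set with $X=\bigcup_i\tau_{d_i}(X)$; it is a self-similar tile if it has positive Lebesgue measure (then it tiles $\mathbb{R}$ by translations). $\mathcal{D}\oplus\mathcal{E}=\mathbb{Z}$ means every integer is uniquely $d+e$ with $d\in\mathcal{D}$, $e\in\mathcal{E}$. *)

(* Defs.v *)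
From Stdlib Require Import Reals Lra Lia ZArith List Rtopology.
Open Scope R_scope.

Definition tau (N : nat) (d : Z) (x : R) : R := (x + IZR d) / INR N.

Definition ifs_invariant (N : nat) (D : list Z) (X : R -> Prop) : Prop :=
  forall x, X x <-> exists d, In d D /\ exists y, X y /\ x = tau N d y.

Definition is_attractor (N : nat) (D : list Z) (X : R -> Prop) : Prop :=
  (exists x, X x) /\ compact X /\ ifs_invariant N D X.

Definition lebesgue_null (X : R -> Prop) : Prop :=
  forall eps, 0 < eps ->
    exists a b : nat -> R,
      (forall n, a n <= b n) /\
      (forall x, X x -> exists n, a n < x < b n) /\
      (forall n, sum_f_R0 (fun k => b k - a k) n <= eps).

Definition positive_measure (X : R -> Prop) : Prop := ~ lebesgue_null X.

Definition direct_sum_Z (D : list Z) (E : Z -> Prop) : Prop :=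
  forall z : Z, exists d e, In d D /\ E e /\ z = (d + e)%Z /\
    forall d' e', In d' D -> E e' -> z = (d' + e')%Z -> d' = d /\ e' = e.

(* Main.v *)
Require Import Defs.
From Stdlib Require Import Reals ZArith List Rtopology Lia Lra ClassicalEpsilon Classical.
Import ListNotations.

Section Konig.
Variable D : list Z.

Definition LT (M : Z) (E : Z -> Prop) : Prop :=
  forall z, (- M <= z <= M)%Z ->
    (exists d e, In d D /\ E e /\ z = (d + e)%Z) /\
    (forall d e d' e', In d D -> E e -> z = (d+e)%Z -> In d' D -> E e' -> z = (d'+e')%Z -> d = d').

Lemma LT_mono M M' E : (M' <= M)%Z -> LT M E -> LT M' E.
Proof. intros H HL z Hz. apply HL. lia. Qed.

Definition goodS (S : Z -> Prop) (P : Z -> Prop) : Prop :=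
  forall M, exists E, LT M E /\ forall z, S z -> (E z <-> P z).

Definition cand (P : Z -> Prop) (y : Z) (b : bool) : Z -> Prop :=
  fun z => if Z.eq_dec z y then (if b then True else False) else P z.

Lemma step1 S P y : goodS S P ->
  exists P', goodS (fun z => S z \/ z = y) P' /\ forall z, S z -> (P' z <-> P z).
Proof.
  intros HG.
  assert (Hb : exists b : bool, forall M, exists E, LT M E /\ (forall z, S z -> (E z <-> P z)) /\
                 (E y <-> (if b then True else False))).
  { apply NNPP; intro Hn.
    assert (H1 : exists M1, forall E, LT M1 E -> (forall z, S z -> (E z <-> P z)) -> ~ (E y <-> True)).
    { apply NNPP; intro H1. apply Hn. exists true. intro M. apply NNPP; intro H2. apply H1. exists M.
      intros E HL HA HE. apply H2. exists E. auto. }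
    assert (H0 : exists M0, forall E, LT M0 E -> (forall z, S z -> (E z <-> P z)) -> ~ (E y <-> False)).
    { apply NNPP; intro H0. apply Hn. exists false. intro M. apply NNPP; intro H2. apply H0. exists M.
      intros E HL HA HE. apply H2. exists E. auto. }
    destruct H1 as [M1 H1]. destruct H0 as [M0 H0].
    destruct (HG (Z.max M0 M1)) as [E [HL HA]].
    assert (A1 := H1 E (LT_mono _ _ _ (Z.le_max_r _ _) HL) HA).
    assert (A0 := H0 E (LT_mono _ _ _ (Z.le_max_l _ _) HL) HA).
    tauto. }
  destruct Hb as [b Hb]. exists (cand P y b). split.
  - intro M. destruct (Hb M) as [E [HL [HA HE]]]. exists E. split; auto.
    intros z [Hz|Hz]; unfold cand; destruct (Z.eq_dec z y); subst; auto; try tauto.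
  - intros z Hz. unfold cand. destruct (Z.eq_dec z y); [|tauto]. subst.
    destruct (Hb 0%Z) as [E [HL [HA HE]]]. specialize (HA _ Hz). tauto.
Qed.

Definition Sn (n : nat) : Z -> Prop := fun z => (Z.abs z < Z.of_nat n)%Z.

Lemma goodS_anti S1 S2 P : (forall z, S1 z -> S2 z) -> goodS S2 P -> goodS S1 P.
Proof. intros H HG M. destruct (HG M) as [E [HL HA]]. exists E. split; auto. Qed.

Lemma step2 n P : goodS (Sn n) P -> exists P', goodS (Sn (S n)) P' /\ forall z, Sn n z -> (P' z <-> P z).
Proof.
  intros HG. destruct (step1 _ _ (Z.of_nat n) HG) as [P1 [H1 A1]].
  destruct (step1 _ _ (- Z.of_nat n)%Z H1) as [P2 [H2 A2]].
  exists P2. split.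
  - eapply goodS_anti; [|exact H2]. intros z Hz. unfold Sn in *. lia.
  - intros z Hz. rewrite A2 by auto. now apply A1.
Qed.

Lemma next_ex n P : exists P', goodS (Sn n) P -> goodS (Sn (S n)) P' /\ forall z, Sn n z -> (P' z <-> P z).
Proof.
  destruct (classic (goodS (Sn n) P)) as [H|H].
  - destruct (step2 n P H) as [P' HP']. exists P'. auto.
  - exists P. tauto.
Qed.

Definition nextP n P : Z -> Prop := proj1_sig (constructive_indefinite_description _ (next_ex n P)).

Lemma nextP_spec n P : goodS (Sn n) P -> goodS (Sn (S n)) (nextP n P) /\ forall z, Sn n z -> (nextP n P z <-> P z).
Proof. unfold nextP. destruct (constructive_indefinite_description _ _) as [P' H]. exact H. Qed.

Fixpoint Pseq (n : nat) : Z -> Prop :=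
  match n with O => fun _ => False | S n => nextP n (Pseq n) end.

Hypothesis Hloc : forall M, exists E, LT M E.

Lemma Pseq_good n : goodS (Sn n) (Pseq n).
Proof.
  induction n.
  - intro M. destruct (Hloc M) as [E HE]. exists E. split; auto. intros z Hz. unfold Sn in Hz. lia.
  - simpl. now apply nextP_spec.
Qed.

Lemma Pseq_coh n m z : (n <= m)%nat -> Sn n z -> (Pseq m z <-> Pseq n z).
Proof.
  induction 1; [tauto|]. intros Hz. simpl. rewrite (proj2 (nextP_spec _ _ (Pseq_good m)) z).
  - auto.
  - unfold Sn in *. lia.
Qed.

Definition Eglob (z : Z) : Prop := Pseq (S (Z.to_nat (Z.abs z))) z.

Lemma Eglob_agree K z : Sn K z -> (Eglob z <-> Pseq K z).
Proof.
  intros Hz. unfold Eglob.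
  assert (H1 : Sn (S (Z.to_nat (Z.abs z))) z) by (unfold Sn; lia).
  destruct (Nat.le_ge_cases K (S (Z.to_nat (Z.abs z)))) as [H|H].
  - now apply Pseq_coh.
  - symmetry. now apply Pseq_coh.
Qed.

Lemma Dbound : exists B, forall d, In d D -> (Z.abs d <= B)%Z.
Proof.
  induction D as [|a l [B HB]].
  - exists 0%Z. intros d [].
  - exists (Z.max (Z.abs a) B). intros d [->|Hd]; [lia|]. specialize (HB d Hd). lia.
Qed.

Lemma konig : exists E, direct_sum_Z D E.
Proof.
  exists Eglob. intro z. destruct Dbound as [B HB].
  set (K := S (Z.to_nat (Z.abs z + B))).
  destruct (Pseq_good K (Z.abs z)) as [E [HL HA]].
  assert (Hr : forall d e, In d D -> z = (d + e)%Z -> Sn K e).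
  { intros d e Hd ->. specialize (HB d Hd). unfold Sn, K. lia. }
  destruct (HL z ltac:(lia)) as [[d [e [Hd [He Hz]]]] Hu].
  exists d, e. split; [auto|]. split.
  { apply (Eglob_agree K); [eauto|]. apply HA; eauto. }
  split; [auto|].
  intros d' e' Hd' He' Hz'.
  assert (E e') by (apply HA; [eauto|]; apply (Eglob_agree K); eauto).
  assert (d' = d) by exact (Hu d' e' d e Hd' H Hz' Hd He Hz). subst d'. split; [reflexivity|]. lia.
Qed.

End Konig.

Lemma NoDup_prod {A B} (l1 : list A) (l2 : list B) : NoDup l1 -> NoDup l2 -> NoDup (list_prod l1 l2).
Proof.
  induction 1 as [|x l Hx Hl IH]; intros H2; simpl; [constructor|].
  apply NoDup_app.
  - apply NoDup_map_NoDup_ForallPairs; [intros a b _ _ E; now inversion E | exact H2].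
  - now apply IH.
  - intros [a b] Ha Hb. apply in_map_iff in Ha as [y [Ey _]]. inversion Ey; subst.
    apply in_prod_iff in Hb as [Hb _]. contradiction.
Qed.

Definition zrange (lo : Z) (n : nat) : list Z := map (fun i => (lo + Z.of_nat i)%Z) (seq 0 n).

Lemma in_zrange lo n p : In p (zrange lo n) <-> (lo <= p < lo + Z.of_nat n)%Z.
Proof.
  unfold zrange. rewrite in_map_iff. split.
  - intros [i [<- Hi]]. apply in_seq in Hi. lia.
  - intros H. exists (Z.to_nat (p - lo)). split; [lia|]. apply in_seq. lia.
Qed.

Lemma zrange_NoDup lo n : NoDup (zrange lo n).
Proof.
  unfold zrange. apply NoDup_map_NoDup_ForallPairs; [|apply seq_NoDup].
  intros x y _ _ H. lia.
Qed.

Lemma zrange_length lo n : length (zrange lo n) = n.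
Proof. unfold zrange. now rewrite length_map, length_seq. Qed.

Definition decb (P : Prop) : bool := if excluded_middle_informative P then true else false.

Lemma decb_true P : decb P = true <-> P.
Proof. unfold decb. destruct (excluded_middle_informative P); split; auto; discriminate. Qed.

Lemma in_filter_decb {A} (P : A -> Prop) l x : In x (filter (fun y => decb (P y)) l) <-> In x l /\ P x.
Proof. rewrite filter_In, decb_true. tauto. Qed.

Section Analysis.
Variable N : nat.
Variable D : list Z.
Variable X : R -> Prop.
Hypothesis HN : (2 <= N)%nat.
Hypothesis HD : NoDup D.
Hypothesis HlenD : length D = N.
Hypothesis Hinv : ifs_invariant N D X.
Hypothesis Hbd : bounded X.

Definition Nz : Z := Z.of_nat N.
Definition Pw (a : nat) : Z := (Nz ^ Z.of_nat a)%Z.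

Lemma Pw_IZR a : IZR (Pw a) = (INR N ^ a)%R.
Proof. unfold Pw, Nz. rewrite <- pow_IZR, INR_IZR_INZ. reflexivity. Qed.

Lemma Pw_nat a : Pw a = Z.of_nat (N ^ a).
Proof. unfold Pw, Nz. now rewrite Nat2Z.inj_pow. Qed.

Lemma Pw_pos a : (0 < Pw a)%Z.
Proof. rewrite Pw_nat. assert (0 < N ^ a)%nat by (apply Nat.neq_0_lt_0, Nat.pow_nonzero; lia). lia. Qed.

Lemma Pw_add a b : Pw (a + b) = (Pw a * Pw b)%Z.
Proof. rewrite !Pw_nat, Nat.pow_add_r. lia. Qed.

Lemma Pw_S a : Pw (S a) = (Nz * Pw a)%Z.
Proof. rewrite !Pw_nat. simpl. unfold Nz. lia. Qed.

Lemma INR_N_pos : (0 < INR N)%R.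
Proof. apply lt_0_INR. lia. Qed.

Lemma powN_pos a : (0 < INR N ^ a)%R.
Proof. apply pow_lt, INR_N_pos. Qed.

Fixpoint tuples (k : nat) : list (list Z) :=
  match k with
  | O => [[]]
  | S k => map (fun p => fst p :: snd p) (list_prod D (tuples k))
  end.

Fixpoint val (t : list Z) : Z :=
  match t with [] => 0%Z | d :: t => (d + Nz * val t)%Z end.

Lemma tuples_S k t : In t (tuples (S k)) <-> exists d tl, t = d :: tl /\ In d D /\ In tl (tuples k).
Proof.
  simpl. rewrite in_map_iff. split.
  - intros [[d tl] [<- Hin]]. apply in_prod_iff in Hin. exists d, tl. simpl. tauto.
  - intros [d [tl [-> [Hd Htl]]]]. exists (d, tl). split; auto. now apply in_prod_iff.
Qed.

Lemma tuples_length k : length (tuples k) = (N ^ k)%nat.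
Proof.
  induction k; simpl; auto. rewrite length_map, length_prod, IHk, HlenD. reflexivity.
Qed.

Lemma tuples_NoDup k : NoDup (tuples k).
Proof.
  induction k; simpl.
  - repeat constructor. intros [].
  - apply NoDup_map_NoDup_ForallPairs; [|now apply NoDup_prod].
    intros [] [] _ _ H. simpl in H. now inversion H.
Qed.

Lemma X_iter k : forall x, X x -> exists t y, In t (tuples k) /\ X y /\ (INR N ^ k * x = y + IZR (val t))%R.
Proof.
  induction k; intros x Hx.
  - exists [], x. simpl. repeat split; auto. lra.
  - destruct (IHk x Hx) as [t [y [Ht [Hy Heq]]]].
    destruct (proj1 (Hinv y) Hy) as [d [Hd [y' [Hy' Hyy]]]].
    exists (d :: t), y'. split; [apply tuples_S; eauto|]. split; auto.
    simpl. rewrite plus_IZR, mult_IZR. unfold Nz. rewrite <- INR_IZR_INZ.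
    rewrite Rmult_assoc, Heq, Hyy. unfold tau. field. apply Rgt_not_eq, INR_N_pos.
Qed.

Lemma X_iter_inv k : forall y t, X y -> In t (tuples k) -> X ((y + IZR (val t)) / INR N ^ k)%R.
Proof.
  induction k; intros y t Hy Ht.
  - simpl in Ht. destruct Ht as [<-|[]]. simpl. replace ((y + 0) / 1)%R with y by field. auto.
  - apply tuples_S in Ht as [d [tl [-> [Hd Htl]]]].
    assert (Hy' : X (tau N d y)) by (apply Hinv; exists d; split; auto; exists y; auto).
    specialize (IHk _ _ Hy' Htl).
    replace ((y + IZR (val (d :: tl))) / INR N ^ S k)%R with ((tau N d y + IZR (val tl)) / INR N ^ k)%R; auto.
    simpl. rewrite plus_IZR, mult_IZR. unfold Nz. rewrite <- INR_IZR_INZ. unfold tau.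
    field. split; apply Rgt_not_eq; [apply powN_pos|apply INR_N_pos].
Qed.

Definition F (a : nat) (p : Z) : Prop :=
  exists x, X x /\ (IZR p <= INR N ^ a * x <= IZR p + 1)%R.

Lemma F_rel a k p : F (a + k) p <-> exists g t, F a g /\ In t (tuples k) /\ p = (g + Pw a * val t)%Z.
Proof.
  split.
  - intros [x [Hx Hp]]. destruct (X_iter k x Hx) as [t [y [Ht [Hy Heq]]]].
    exists (p - Pw a * val t)%Z, t. split; [|split; auto; ring].
    exists y. split; auto. rewrite minus_IZR, mult_IZR, Pw_IZR.
    rewrite pow_add, Rmult_assoc, Heq in Hp. lra.
  - intros [g [t [[y [Hy Hg]] [Ht ->]]]].
    exists ((y + IZR (val t)) / INR N ^ k)%R. split; [now apply X_iter_inv|].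
    rewrite plus_IZR, mult_IZR, Pw_IZR, pow_add.
    replace (INR N ^ a * INR N ^ k * ((y + IZR (val t)) / INR N ^ k))%R with
      (INR N ^ a * y + INR N ^ a * IZR (val t))%R.
    + lra.
    + field. apply Rgt_not_eq, powN_pos.
Qed.

Definition Lb : Z := (- up (- (proj1_sig (constructive_indefinite_description _ Hbd))))%Z.
Definition Ub : Z := up (proj1_sig (constructive_indefinite_description _ (proj2_sig (constructive_indefinite_description _ Hbd)))).

Lemma X_bounds x : X x -> (IZR Lb <= x <= IZR Ub)%R.
Proof.
  unfold Lb, Ub. destruct (constructive_indefinite_description _ Hbd) as [m Hm]. simpl.
  destruct (constructive_indefinite_description _ Hm) as [M HM]. simpl.
  intros Hx. specialize (HM x Hx). destruct (archimed (- m)%R). destruct (archimed M).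
  rewrite opp_IZR. lra.
Qed.

Lemma F_range a p : F a p -> (Pw a * Lb - 1 <= p <= Pw a * Ub)%Z.
Proof.
  intros [x [Hx Hp]]. destruct (X_bounds x Hx) as [H1 H2].
  assert (Hq := powN_pos a).
  assert (INR N ^ a * IZR Lb <= INR N ^ a * x)%R by (apply Rmult_le_compat_l; lra).
  assert (INR N ^ a * x <= INR N ^ a * IZR Ub)%R by (apply Rmult_le_compat_l; lra).
  rewrite <- Pw_IZR, <- mult_IZR in *. split.
  - assert (Pw a * Lb <= p + 1)%Z by (apply le_IZR; rewrite plus_IZR; simpl; lra). lia.
  - apply le_IZR. lra.
Qed.

Definition Flist (a : nat) : list Z :=
  filter (fun p => decb (F a p))
    (zrange (Pw a * Lb - 1) (Z.to_nat (Pw a * Ub - (Pw a * Lb - 1) + 1))).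

Lemma In_Flist a p : In p (Flist a) <-> F a p.
Proof.
  unfold Flist. rewrite in_filter_decb, in_zrange. split; [tauto|].
  intros H. split; auto. pose proof (F_range a p H). lia.
Qed.

Lemma Flist_NoDup a : NoDup (Flist a).
Proof. apply NoDup_filter, zrange_NoDup. Qed.

Definition cnt a := length (Flist a).


Lemma sum_bound (f : nat -> R) (L : nat) (c : R) : (0 <= c)%R ->
  (forall k, f k = if lt_dec k L then c else 0%R) ->
  forall n, (sum_f_R0 f n <= INR L * c)%R.
Proof.
  intros Hc Hf.
  assert (H : forall n, (sum_f_R0 f n <= INR (Nat.min (S n) L) * c)%R).
  { induction n; simpl sum_f_R0.
    - rewrite Hf. destruct (lt_dec 0 L); destruct L; simpl; try lia; lra.
    - rewrite Hf. destruct (lt_dec (S n) L).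
      + replace (Nat.min (S (S n)) L) with (S (Nat.min (S n) L)) by lia.
        rewrite S_INR. lra.
      + replace (Nat.min (S (S n)) L) with (Nat.min (S n) L) by lia. lra. }
  intros n. eapply Rle_trans; [apply H|]. apply Rmult_le_compat_r; auto. apply le_INR. lia.
Qed.

Lemma cover a eps : (2 * INR (cnt a) / INR N ^ a <= eps)%R ->
  exists an bn : nat -> R, (forall n, an n <= bn n)%R /\ (forall x, X x -> exists n, an n < x < bn n)%R /\
    (forall n, sum_f_R0 (fun k => bn k - an k) n <= eps)%R.
Proof.
  intros Heps. set (l := Flist a). set (L := length l). set (Na := (INR N ^ a)%R).
  assert (HNa : (0 < Na)%R) by apply powN_pos.
  exists (fun n => if lt_dec n L then ((IZR (nth n l 0%Z) - 1) / Na)%R else 0%R).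
  exists (fun n => if lt_dec n L then ((IZR (nth n l 0%Z) + 1) / Na)%R else 0%R).
  split; [|split].
  - intro n. destruct (lt_dec n L); [|lra]. unfold Rdiv. apply Rmult_le_compat_r.
    + left. now apply Rinv_0_lt_compat.
    + lra.
  - intros x Hx. set (r := (Na * x)%R). destruct (archimed r) as [H1 H2].
    set (p := (up r - 1)%Z).
    assert (Hp : F a p).
    { exists x. split; auto. fold Na. fold r. unfold p. rewrite minus_IZR. simpl. lra. }
    apply In_Flist in Hp. fold l in Hp. destruct (In_nth l p 0%Z Hp) as [n [Hn Hnth]].
    exists n. destruct (lt_dec n L); [|unfold L in *; lia]. rewrite Hnth.
    replace x with (r / Na)%R by (unfold r; field; lra).
    unfold Rdiv. unfold p. rewrite minus_IZR. simpl.
    split; apply Rmult_lt_compat_r; try (apply Rinv_0_lt_compat; lra); lra.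
  - intros n. eapply Rle_trans.
    + apply (sum_bound _ L (2 / Na)%R).
      * unfold Rdiv. apply Rmult_le_pos; [lra|]. left. now apply Rinv_0_lt_compat.
      * intros k. destruct (lt_dec k L); [field; lra|lra].
    + unfold L, l. fold (cnt a). replace (INR (cnt a) * (2 / Na))%R with (2 * INR (cnt a) / Na)%R by (field; lra).
      exact Heps.
Qed.

Definition rr a := (INR (cnt a) / INR N ^ a)%R.

Fixpoint sa (m i : nat) : nat := match i with O => O | S i => (sa m i + (sa m i + m))%nat end.

Lemma decay m : (forall a, (2 * cnt (a + (a + m)) + N ^ a * cnt a <= 2 * N ^ (a + m) * cnt a)%nat) ->
  lebesgue_null X.
Proof.
  intros Hd. set (v := (INR N ^ m)%R).
  assert (Hv : (1 <= v)%R) by (unfold v; apply pow_R1_Rle; apply (le_INR 1); lia).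
  set (lam := (1 - 1 / (2 * v))%R).
  assert (Hl0 : (0 <= lam)%R).
  { unfold lam. assert (1 / (2 * v) <= 1 / 2)%R.
    { unfold Rdiv. rewrite !Rmult_1_l. apply Rinv_le_contravar; lra. } lra. }
  assert (Hl1 : (lam < 1)%R).
  { unfold lam. assert (0 < 1 / (2 * v))%R by (unfold Rdiv; rewrite Rmult_1_l; apply Rinv_0_lt_compat; lra). lra. }
  assert (Hstep : forall a, (rr (a + (a + m)) <= lam * rr a)%R).
  { intro a. specialize (Hd a). apply le_INR in Hd.
    rewrite !plus_INR, !mult_INR, !pow_INR in Hd. rewrite pow_add in Hd.
    unfold rr, lam. rewrite !pow_add. fold v.
    set (u := (INR N ^ a)%R) in *. assert (Hu : (0 < u)%R) by apply powN_pos.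
    set (c := INR (cnt a)) in *. set (c' := INR (cnt (a + (a + m)))) in *.
    assert (Hc : (0 <= c)%R) by apply pos_INR.
    replace ((1 - 1 / (2 * v)) * (c / u))%R with ((2 * (u * v) * c - u * c) * / (2 * (u * (u * v))))%R by (field; lra).
    replace (c' / (u * (u * v)))%R with ((2 * c') * / (2 * (u * (u * v))))%R by (field; lra).
    apply Rmult_le_compat_r.
    - left. apply Rinv_0_lt_compat. apply Rmult_lt_0_compat; [lra|]. apply Rmult_lt_0_compat; [lra|]. nra.
    - simpl in Hd. fold v in Hd. lra. }
  assert (Hseq : forall i, (rr (sa m i) <= lam ^ i * rr 0)%R).
  { induction i; simpl; [lra|]. eapply Rle_trans; [apply Hstep|].
    rewrite Rmult_assoc. apply Rmult_le_compat_l; auto. }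
  assert (Hr0 : (0 <= rr 0)%R) by (unfold rr; simpl; unfold Rdiv; rewrite Rinv_1, Rmult_1_r; apply pos_INR).
  intros eps Heps.
  assert (Hl : (Rabs lam < 1)%R) by (rewrite Rabs_right; lra).
  destruct (pow_lt_1_zero lam Hl (eps / (2 * (rr 0 + 1)))%R) as [i0 Hi0].
  { apply Rdiv_lt_0_compat; lra. }
  specialize (Hi0 i0 (le_n _)). rewrite Rabs_right in Hi0 by (apply Rle_ge, pow_le; lra).
  apply (cover (sa m i0)).
  assert (H1 := Hseq i0).
  assert (H2 : (lam ^ i0 * rr 0 <= eps / (2 * (rr 0 + 1)) * rr 0)%R) by (apply Rmult_le_compat_r; lra).
  assert (H3 : (eps / (2 * (rr 0 + 1)) * rr 0 <= eps / 2)%R).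
  { replace (eps / 2)%R with (eps / (2 * (rr 0 + 1)) * (rr 0 + 1))%R by (field; lra).
    apply Rmult_le_compat_l; [|lra]. left. apply Rdiv_lt_0_compat; lra. }
  replace (2 * INR (cnt (sa m i0)) / INR N ^ sa m i0)%R with
    (2 * rr (sa m i0))%R by (unfold rr, Rdiv; ring). lra.
Qed.


Lemma pow_gt_id n : (n < N ^ n)%nat.
Proof.
  induction n; simpl; [lia|]. nia.
Qed.

Lemma F_coarse a k p : F (a + k) p -> F a (p / Pw k).
Proof.
  intros [x [Hx Hp]]. exists x. split; auto.
  assert (Hq := Pw_pos k).
  assert (Hdm := Z.div_mod p (Pw k) ltac:(lia)).
  assert (Hb := Z.mod_pos_bound p (Pw k) Hq).
  set (n := (p / Pw k)%Z) in *. set (y := (INR N ^ a * x)%R).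
  rewrite pow_add in Hp. rewrite <- (Pw_IZR k) in Hp.
  assert (Hqr : (0 < IZR (Pw k))%R) by (apply IZR_lt; lia).
  assert (E1 : (IZR (Pw k) * IZR n <= IZR p)%R) by (rewrite <- mult_IZR; apply IZR_le; lia).
  assert (E2 : (IZR p + 1 <= IZR (Pw k) * (IZR n + 1))%R).
  { rewrite <- (plus_IZR n 1), <- mult_IZR, <- (plus_IZR p 1). apply IZR_le. lia. }
  replace (INR N ^ a * IZR (Pw k) * x)%R with (IZR (Pw k) * y)%R in Hp by (unfold y; ring).
  split.
  - apply (Rmult_le_reg_l (IZR (Pw k))); auto. lra.
  - apply (Rmult_le_reg_l (IZR (Pw k))); auto. lra.
Qed.

Lemma local (M a : nat) :
  (2 * N ^ (a + S (2 * M)) * cnt a < 2 * cnt (a + (a + S (2 * M))) + N ^ a * cnt a)%nat ->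
  exists E, LT D (Z.of_nat M) E.
Proof.
  intros Hlt. set (m := S (2 * M)) in *.
  set (A := Pw a). set (Q := Pw (a + m)). set (R := Pw m).
  assert (HQ : Q = (A * R)%Z) by apply Pw_add.
  assert (HA : (0 < A)%Z) by apply Pw_pos.
  assert (HR : (2 * Z.of_nat M + 1 < R)%Z).
  { unfold R. rewrite Pw_nat. pose proof (pow_gt_id m). unfold m in *. lia. }
  assert (Hk : (a + m = S (a + 2 * M))%nat) by (unfold m; lia).
  set (FA := Flist a). set (FS := Flist (a + (a + m))).
  set (PL := list_prod FA (tuples (a + m))).
  set (phi := fun gt : Z * list Z => (fst gt + A * val (snd gt))%Z).
  set (pre := fun p gt => In gt PL /\ phi gt = p).
  set (good := fun p => F (a + (a + m)) p /\ forall x y, pre p x -> pre p y -> x = y).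
  assert (Hpre : forall p, F (a + (a + m)) p -> exists gt, pre p gt).
  { intros p Hp. apply F_rel in Hp as [g [t [Hg [Ht ->]]]]. exists (g, t).
    split; [|reflexivity]. apply in_prod_iff. split; auto. now apply In_Flist. }
  assert (Hclaim : exists n r, (0 <= r < A)%Z /\ forall u, (0 <= u < R)%Z -> good (n * Q + A * u + r)%Z).
  { apply NNPP; intro Hno.
    assert (Hno' : forall n r, In n FA -> (0 <= r < A)%Z -> exists u, (0 <= u < R)%Z /\ ~ good (n * Q + A * u + r)%Z).
    { intros n r _ Hr. apply NNPP; intro H. apply Hno. exists n, r. split; auto.
      intros u Hu. apply NNPP; intro H'. apply H. eauto. }
    clear Hno.
    set (region := map (fun nq => (fst nq * Q + snd nq)%Z) (list_prod FA (zrange 0 (Z.to_nat Q)))).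
    set (pairs := list_prod FA (zrange 0 (Z.to_nat A))).
    set (bad := filter (fun p => decb (~ good p)) region).
    set (missing := filter (fun p => decb (~ F (a + (a + m)) p)) region).
    set (collide := filter (fun p => decb (exists x y, pre p x /\ pre p y /\ x <> y)) FS).
    assert (HQn : Z.to_nat Q = (N ^ (a + m))%nat) by (unfold Q; rewrite Pw_nat; lia).
    assert (HAn : Z.to_nat A = (N ^ a)%nat) by (unfold A; rewrite Pw_nat; lia).
    assert (L1 : length region = (cnt a * N ^ (a + m))%nat).
    { unfold region. rewrite length_map, length_prod, zrange_length, HQn. reflexivity. }
    assert (L2 : length pairs = (cnt a * N ^ a)%nat).
    { unfold pairs. rewrite length_prod, zrange_length, HAn. reflexivity. }
    assert (L3 : length PL = (cnt a * N ^ (a + m))%nat).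
    { unfold PL. rewrite length_prod, tuples_length. reflexivity. }
    assert (Hreg : forall p, In p region <-> exists n q, In n FA /\ (0 <= q < Q)%Z /\ p = (n * Q + q)%Z).
    { intro p. unfold region. rewrite in_map_iff. split.
      - intros [[n q] [<- Hin]]. apply in_prod_iff in Hin as [Hn Hq]. apply in_zrange in Hq.
        exists n, q. simpl. split; auto. split; [lia|reflexivity].
      - intros [n [q [Hn [Hq ->]]]]. exists (n, q). split; [reflexivity|]. apply in_prod_iff.
        split; auto. apply in_zrange. lia. }
    assert (N1 : NoDup region).
    { unfold region. apply NoDup_map_NoDup_ForallPairs.
      - intros [n q] [n' q'] Hi Hi' Heq. simpl in Heq.
        apply in_prod_iff in Hi as [_ Hq]. apply in_prod_iff in Hi' as [_ Hq'].
        apply in_zrange in Hq. apply in_zrange in Hq'.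
        assert (E1 : n = ((n * Q + q) / Q)%Z) by (apply Z.div_unique with q; lia).
        assert (E2 : n' = ((n' * Q + q') / Q)%Z) by (apply Z.div_unique with q'; lia).
        assert (n = n') by (rewrite E1, E2, Heq; reflexivity). subst n'. f_equal. lia.
      - apply NoDup_prod; [apply Flist_NoDup|apply zrange_NoDup]. }
    assert (N2 : NoDup PL) by (apply NoDup_prod; [apply Flist_NoDup|apply tuples_NoDup]).
    assert (I1 : forall p, In p FS -> In p region).
    { intros p Hp. apply In_Flist in Hp. apply Hreg.
      exists (p / Q)%Z, (p mod Q)%Z. split; [apply In_Flist; now apply F_coarse|].
      assert (Q > 0)%Z by (unfold Q; pose proof (Pw_pos (a + m)); lia).
      split; [apply Z.mod_pos_bound; lia|]. rewrite Z.mul_comm. apply Z.div_mod. lia. }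
    assert (B1 : (length missing + length FS <= length region)%nat).
    { rewrite <- length_app. apply NoDup_incl_length.
      - apply NoDup_app; [apply NoDup_filter, N1|apply Flist_NoDup|].
        intros p Hp1 Hp2. apply in_filter_decb in Hp1 as [_ Hp1]. apply Hp1. now apply In_Flist.
      - intros p Hp. apply in_app_or in Hp as [Hp|Hp]; [now apply in_filter_decb in Hp as [Hp _]|].
        now apply I1. }
    assert (B2 : (length collide + length FS <= length PL)%nat).
    { set (pick := fun p => epsilon (inhabits (0%Z, @nil Z)) (fun gt => pre p gt)).
      set (pick2 := fun p => epsilon (inhabits (0%Z, @nil Z)) (fun gt => pre p gt /\ gt <> pick p)).
      assert (Hp1 : forall p, In p FS -> pre p (pick p)).
      { intros p Hp. apply In_Flist in Hp. apply (epsilon_spec (inhabits (0%Z, @nil Z)) (fun gt => pre p gt)).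
        now apply Hpre. }
      assert (Hp2 : forall p, In p collide -> pre p (pick2 p) /\ pick2 p <> pick p).
      { intros p Hp. apply in_filter_decb in Hp as [_ [x [y [Hx [Hy Hxy]]]]].
        apply (epsilon_spec (inhabits (0%Z, @nil Z)) (fun gt => pre p gt /\ gt <> pick p)).
        destruct (classic (x = pick p)) as [->|Hne]; [exists y|exists x]; split; auto. }
      assert (Hc : forall p, In p collide -> In p FS) by (intros p Hp; now apply in_filter_decb in Hp as [Hp _]).
      rewrite Nat.add_comm, <- (length_map pick FS), <- (length_map pick2 collide), <- length_app.
      apply NoDup_incl_length.
      - apply NoDup_app.
        + apply NoDup_map_NoDup_ForallPairs; [|apply Flist_NoDup].
          intros p p' H H' E. destruct (Hp1 p H) as [_ <-]. destruct (Hp1 p' H') as [_ <-]. now rewrite E.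
        + apply NoDup_map_NoDup_ForallPairs; [|apply NoDup_filter, Flist_NoDup].
          intros p p' H H' E. destruct (Hp2 p H) as [[_ <-] _]. destruct (Hp2 p' H') as [[_ <-] _]. now rewrite E.
        + intros gt H1 H2. apply in_map_iff in H1 as [p [<- Hp]]. apply in_map_iff in H2 as [p' [E Hp']].
          destruct (Hp2 p' Hp') as [[_ Ep'] Hne]. destruct (Hp1 p Hp) as [_ Ep].
          assert (p = p') by (rewrite <- Ep, <- Ep', E; reflexivity). subst p'. auto.
      - intros gt H. apply in_app_or in H as [H|H]; apply in_map_iff in H as [p [<- Hp]].
        + apply Hp1. auto.
        + apply Hp2. auto. }
    assert (B3 : (length pairs <= length bad)%nat).
    { rewrite <- (length_map (fun p => ((p / Q)%Z, (p mod A)%Z)) bad).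
      apply NoDup_incl_length; [apply NoDup_prod; [apply Flist_NoDup|apply zrange_NoDup]|].
      intros [n r] Hnr. apply in_prod_iff in Hnr as [Hn Hr]. apply in_zrange in Hr.
      destruct (Hno' n r Hn ltac:(lia)) as [u [Hu Hgu]].
      apply in_map_iff. exists (n * Q + A * u + r)%Z. split.
      - f_equal.
        + symmetry. apply Z.div_unique with (A * u + r)%Z; [left; rewrite HQ; nia|ring].
        + symmetry. apply Z.mod_unique with (n * R + u)%Z; [left; lia|rewrite HQ; ring].
      - apply in_filter_decb. split; auto. apply Hreg. exists n, (A * u + r)%Z.
        split; auto. split; [rewrite HQ; nia|ring]. }
    assert (B4 : (length bad <= length missing + length collide)%nat).
    { rewrite <- length_app. apply NoDup_incl_length; [apply NoDup_filter, N1|].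
      intros p Hp. apply in_filter_decb in Hp as [Hp Hg].
      destruct (classic (F (a + (a + m)) p)) as [HF|HF].
      - apply in_or_app. right. apply in_filter_decb. split; [now apply In_Flist|].
        apply NNPP; intro Hn. apply Hg. split; auto. intros x y Hx Hy. apply NNPP; intro. apply Hn. eauto.
      - apply in_or_app. left. apply in_filter_decb. auto. }
    unfold FS in *. fold (cnt (a + (a + m))) in *. lia. }
  destruct Hclaim as [n [r [Hr Hgood]]].
  set (c := (n * R + Z.of_nat M)%Z).
  exists (fun e => exists tl g, In tl (tuples (a + 2 * M)) /\ F a g /\ (g + Nz * A * val tl = A * (e + c) + r)%Z).
  intros z Hz. set (u := (z + Z.of_nat M)%Z).
  assert (Hu : (0 <= u < R)%Z) by (unfold u; lia).
  assert (Hid : (n * Q + A * u + r = A * (z + c) + r)%Z) by (unfold u, c; rewrite HQ; ring).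
  destruct (Hgood u Hu) as [HF Huniq]. rewrite Hid in HF, Huniq.
  split.
  - apply F_rel in HF as [g [t [Hg [Ht Hp]]]]. rewrite Hk in Ht. apply tuples_S in Ht as [d [tl [-> [Hd Htl]]]].
    exists d, (z - d)%Z. split; auto. split; [|lia].
    exists tl, g. split; auto. split; auto. simpl in Hp. fold A in Hp. lia.
  - intros d e d' e' Hd [tl [g [Htl [Hg Heq]]]] Hz1 Hd' [tl' [g' [Htl' [Hg' Heq']]]] Hz2.
    assert (P1 : pre (A * (z + c) + r)%Z (g, d :: tl)).
    { split.
      - apply in_prod_iff. split; [now apply In_Flist|]. rewrite Hk. apply tuples_S. eauto.
      - unfold phi. simpl. subst z. lia. }
    assert (P2 : pre (A * (z + c) + r)%Z (g', d' :: tl')).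
    { split.
      - apply in_prod_iff. split; [now apply In_Flist|]. rewrite Hk. apply tuples_S. eauto.
      - unfold phi. simpl. rewrite Hz2 in *. lia. }
    specialize (Huniq _ _ P1 P2). now inversion Huniq.
Qed.

End Analysis.

Theorem proposition4p3 (N : nat) (D : list Z) (X : R -> Prop) :
  (2 <= N)%nat ->
  NoDup D -> length D = N ->
  is_attractor N D X ->
  positive_measure X ->
  exists E : Z -> Prop, direct_sum_Z D E.
Proof.
  intros HN HD HlenD [Hne [Hc Hinv]] Hpos.
  pose proof (compact_P1 X Hc) as Hbd.
  apply konig. intro M.
  assert (Hn : forall M' : nat, exists E, LT D (Z.of_nat M') E).
  { intro M'. apply NNPP; intro Hno. apply Hpos.
    apply (decay N D X HN HlenD Hbd (S (2 * M'))).
    intro a. apply Nat.nlt_ge; intro Hlt. apply Hno.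
    exact (local N D X HN HD HlenD Hinv Hbd M' a Hlt). }
  destruct (Hn (Z.to_nat M)) as [E HE]. exists E. eapply LT_mono; [|exact HE]. lia.
Qed.
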